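(* There exists a set $W \subseteq \mathbb{Z}$ such that $W + W = \mathbb{Z}$ and $W$ contains no 3-term arithmetic progression.
   Context: For $X, Y \subseteq \mathbb{Z}$, $X + Y = \{x + y : x \in X, y \in Y\}$. A 3-term arithmetic progression in $W$ is a triple $w - d, w, w + d$ of elements of $W$ with $d \neq 0$. *)

(* Defs.v *)
From Stdlib Require Import ZArith.
Open Scope Z_scope.

Definition sumset (X Y : Z -> Prop) : Z -> Prop :=
  fun z => exists x y, X x /\ Y y /\ z = x + y.

Definition has_3AP (W : Z -> Prop) : Prop :=
  exists w d, d <> 0 /\ W (w - d) /\ W w /\ W (w + d).

(* Main.v *)
Require Import Defs.
From Stdlib Require Import ZArith Lia.
Open Scope Z_scope.

Inductive inA : Z -> Prop :=
| A0 : inA 0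
| A3 n : inA n -> inA (3*n)
| A31 n : inA n -> inA (3*n+1).

Lemma inA_nonneg n : inA n -> 0 <= n.
Proof. induction 1; lia. Qed.

Lemma inA_dec n : inA n -> exists m d, n = 3*m+d /\ (d = 0 \/ d = 1) /\ inA m.
Proof.
  destruct 1.
  - exists 0, 0. repeat split; auto. constructor.
  - exists n, 0. repeat split; auto; lia.
  - exists n, 1. repeat split; auto.
Qed.

Lemma apfree_aux (k : nat) : forall a b c, (Z.abs_nat b <= k)%nat ->
  inA a -> inA b -> inA c -> a + c = 2*b -> a = c.
Proof.
  induction k as [|k IH]; intros a b c Hk Ha Hb Hc E.
  - assert (b = 0) by lia. pose proof (inA_nonneg _ Ha); pose proof (inA_nonneg _ Hc); lia.
  - pose proof (inA_nonneg _ Ha) as Ha0; pose proof (inA_nonneg _ Hc) as Hc0;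
    pose proof (inA_nonneg _ Hb) as Hb0.
    destruct (Z.eq_dec b 0) as [->|Hbn]; [lia|].
    destruct (inA_dec _ Ha) as [a' [da [-> [Hda Ha']]]].
    destruct (inA_dec _ Hb) as [b' [db [-> [Hdb Hb']]]].
    destruct (inA_dec _ Hc) as [c' [dc [-> [Hdc Hc']]]].
    pose proof (inA_nonneg _ Hb').
    assert (Hd : da + dc = 2*db) by (destruct Hda, Hdb, Hdc; subst; lia).
    assert (a' = c').
    { apply (IH a' b' c'); auto; lia. }
    subst. lia.
Qed.

Lemma sum_aux (k : nat) : forall n, (Z.abs_nat n <= k)%nat -> 0 <= n ->
  exists a c, inA a /\ inA c /\ n = a + c.
Proof.
  induction k as [|k IH]; intros n Hk Hn.
  - exists 0, 0. repeat split; try constructor; lia.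
  - destruct (Z.eq_dec n 0) as [->|Hn0].
    + exists 0, 0. repeat split; try constructor; lia.
    + pose proof (Z.div_mod n 3 ltac:(lia)).
      pose proof (Z.mod_pos_bound n 3 ltac:(lia)).
      destruct (IH (n / 3)) as [a [c [Ha [Hc E]]]]; [lia|lia|].
      assert (Hr : n mod 3 = 0 \/ n mod 3 = 1 \/ n mod 3 = 2) by lia.
      destruct Hr as [Hr|[Hr|Hr]].
      * exists (3*a), (3*c). repeat split; try constructor; auto; lia.
      * exists (3*a+1), (3*c). repeat split; try constructor; auto; lia.
      * exists (3*a+1), (3*c+1). repeat split; try constructor; auto; lia.
Qed.

Lemma diff_aux (k : nat) : forall n, (Z.abs_nat n <= k)%nat ->
  exists a c, inA a /\ inA c /\ n = a - c.
Proof.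
  induction k as [|k IH]; intros n Hk.
  - exists 0, 0. repeat split; try constructor; lia.
  - destruct (Z.eq_dec n 0) as [->|Hn0].
    + exists 0, 0. repeat split; try constructor; lia.
    + pose proof (Z.div_mod n 3 ltac:(lia)).
      pose proof (Z.mod_pos_bound n 3 ltac:(lia)).
      assert (Hr : n mod 3 = 0 \/ n mod 3 = 1 \/ n mod 3 = 2) by lia.
      destruct Hr as [Hr|[Hr|Hr]].
      * destruct (IH (n / 3)) as [a [c [Ha [Hc E]]]]; [lia|].
        exists (3*a), (3*c). repeat split; try constructor; auto; lia.
      * destruct (IH (n / 3)) as [a [c [Ha [Hc E]]]]; [lia|].
        exists (3*a+1), (3*c). repeat split; try constructor; auto; lia.
      * destruct (IH (n / 3 + 1)) as [a [c [Ha [Hc E]]]]; [lia|].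
        exists (3*a), (3*c+1). repeat split; try constructor; auto; lia.
Qed.

Theorem proposition3 :
  exists W : Z -> Prop, (forall z : Z, sumset W W z) /\ ~ has_3AP W.
Proof.
  exists (fun x => (exists a, inA a /\ x = 2*a) \/ (exists a, inA a /\ x = -1 - 2*a)).
  split.
  - intro z. unfold sumset.
    destruct (Zeven_odd_dec z) as [Hm|Hm]; [apply Zeven_ex in Hm as [m Hm]|apply Zodd_ex in Hm as [m Hm]].
    + destruct (Z_le_gt_dec 0 m).
      * destruct (sum_aux (Z.abs_nat m) m ltac:(lia) ltac:(lia)) as [a [c [Ha [Hc E]]]].
        exists (2*a), (2*c). split; [left; eauto|split; [left; eauto|lia]].
      * destruct (sum_aux (Z.abs_nat (-m-1)) (-m-1) ltac:(lia) ltac:(lia)) as [a [c [Ha [Hc E]]]].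
        exists (-1-2*a), (-1-2*c). split; [right; eauto|split; [right; eauto|lia]].
    + destruct (diff_aux (Z.abs_nat (m+1)) (m+1) ltac:(lia)) as [a [c [Ha [Hc E]]]].
      exists (2*a), (-1-2*c). split; [left; eauto|split; [right; eauto|lia]].
  - intros [w [d [Hd [H1 [H2 H3]]]]].
    destruct H1 as [[a1 [Ha1 E1]]|[a1 [Ha1 E1]]];
    destruct H2 as [[b [Hb E2]]|[b [Hb E2]]];
    destruct H3 as [[a2 [Ha2 E3]]|[a2 [Ha2 E3]]];
    pose proof (inA_nonneg _ Ha1); pose proof (inA_nonneg _ Ha2); pose proof (inA_nonneg _ Hb);
    try lia.
    + assert (a1 = a2) by (apply (apfree_aux (Z.abs_nat b) a1 b a2); auto; lia). lia.
    + assert (a1 = a2) by (apply (apfree_aux (Z.abs_nat b) a1 b a2); auto; lia). lia.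
Qed.
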